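(* Let $d\ge3$, $\chi^0=c_0(-\mu)^{1-d/2}$ with $c_0\neq0$, and let $\xi^a$ be a timelike vector field with $\nabla_aT_0^{ab}=0$, where $T_0^{ab}=4\chi^0_{\mu\mu}\xi^a\xi^b+2\chi^0_\mu g^{ab}$. Then (i) $\dot\mu/\mu=2D/d$ and $\dot\xi^b=(\dot\mu/\mu)\xi^b-\tfrac12\nabla^b\mu$; (ii) the entropy current $S_0^a:=\partial\chi^0/\partial\xi_a-\xi_bT_0^{ab}=-4\mu\chi^0_{\mu\mu}\xi^a$ satisfies $\nabla_aS_0^a=0$; (iii) if $\nabla_{(a}\xi_{b)}=t\,g_{ab}+s\,\xi_a\xi_b$ for some functions $t,s$, then $s=0$ and $t=D/d$, i.e. $\xi^a$ is a conformal Killing vector field.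
   Context: $\mu:=\xi^c\xi_c$, $D:=\nabla_c\xi^c$, $\dot\mu:=\xi^a\nabla_a\mu$, $\dot\xi^b:=\xi^a\nabla_a\xi^b$; subscripts $\mu$ denote derivatives with respect to $\mu$. *)

(* Defs.v *)
(* local coordinate formalization on an open subset U of R^d. *)
From Stdlib Require Import Reals Lra Lia.
Open Scope R_scope.

(* A point of R^d in coordinates; only the coordinates 0..d-1 are relevant. *)
Definition pt := nat -> R.

Fixpoint sumd (n : nat) (f : nat -> R) : R :=
  match n with O => 0 | S k => sumd k f + f k end.

Definition kdelta (a b : nat) : R := if Nat.eqb a b then 1 else 0.

Definition upd (x : pt) (c : nat) (h : R) : pt :=
  fun i => if Nat.eqb i c then h else x i.

Definition has_pd (f : pt -> R) (c : nat) (x : pt) (l : R) : Prop :=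
  derivable_pt_lim (fun h => f (upd x c h)) (x c) l.

Definition open_set (d : nat) (U : pt -> Prop) : Prop :=
  forall x, U x -> exists eps, 0 < eps /\
    forall y, (forall i, (i < d)%nat -> Rabs (y i - x i) < eps) -> U y.

Definition lorentzian (d : nat) (gx : nat -> nat -> R) : Prop :=
  exists e : nat -> nat -> R,
    forall i j, (i < d)%nat -> (j < d)%nat ->
      sumd d (fun a => sumd d (fun b => gx a b * e i a * e j b)) =
      (if Nat.eqb i j then (if Nat.eqb i 0 then -1 else 1) else 0).

(* g : metric g_ab, ginv : inverse metric g^ab, dg x c a b = partial_c g_ab *)
Definition spacetime (d : nat) (U : pt -> Prop) (g ginv : pt -> nat -> nat -> R)
    (dg : pt -> nat -> nat -> nat -> R) : Prop :=
  open_set d U /\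
  forall x, U x ->
    (forall a b, (a < d)%nat -> (b < d)%nat -> g x a b = g x b a) /\
    (forall a c, (a < d)%nat -> (c < d)%nat ->
        sumd d (fun b => g x a b * ginv x b c) = kdelta a c) /\
    lorentzian d (g x) /\
    (forall a b c, (a < d)%nat -> (b < d)%nat -> (c < d)%nat ->
        has_pd (fun y => g y a b) c x (dg x c a b)).

(* xi : components xi^a, dxi x c a = partial_c xi^a *)
Definition vector_field (d : nat) (U : pt -> Prop) (xi : pt -> nat -> R)
    (dxi : pt -> nat -> nat -> R) : Prop :=
  forall x, U x -> forall a c, (a < d)%nat -> (c < d)%nat ->
    has_pd (fun y => xi y a) c x (dxi x c a).

Definition Gam (d : nat) (ginv : pt -> nat -> nat -> R)
    (dg : pt -> nat -> nat -> nat -> R) (x : pt) (a b c : nat) : R :=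
  / 2 * sumd d (fun e => ginv x a e * (dg x b e c + dg x c e b - dg x e b c)).

Definition cov_xi (d : nat) (ginv : pt -> nat -> nat -> R) (dg : pt -> nat -> nat -> nat -> R) (xi : pt -> nat -> R) (dxi : pt -> nat -> nat -> R)
    (x : pt) (a b : nat) : R :=
  dxi x a b + sumd d (fun c => Gam d ginv dg x b a c * xi x c).

Definition xi_low (d : nat) (g : pt -> nat -> nat -> R) (xi : pt -> nat -> R) (x : pt) (a : nat) : R :=
  sumd d (fun b => g x a b * xi x b).

Definition cov_xi_low (d : nat) (g ginv : pt -> nat -> nat -> R) (dg : pt -> nat -> nat -> nat -> R)
    (xi : pt -> nat -> R) (dxi : pt -> nat -> nat -> R) (x : pt) (a b : nat) : R :=
  sumd d (fun c => g x b c * cov_xi d ginv dg xi dxi x a c).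

Definition mu (d : nat) (g : pt -> nat -> nat -> R) (xi : pt -> nat -> R) (x : pt) : R := sumd d (fun a => xi_low d g xi x a * xi x a).

Definition Dv (d : nat) (ginv : pt -> nat -> nat -> R) (dg : pt -> nat -> nat -> nat -> R)
    (xi : pt -> nat -> R) (dxi : pt -> nat -> nat -> R) (x : pt) : R := sumd d (fun a => cov_xi d ginv dg xi dxi x a a).

Definition xidot (d : nat) (ginv : pt -> nat -> nat -> R) (dg : pt -> nat -> nat -> nat -> R)
    (xi : pt -> nat -> R) (dxi : pt -> nat -> nat -> R) (x : pt) (b : nat) : R :=
  sumd d (fun a => xi x a * cov_xi d ginv dg xi dxi x a b).

(* chi^0(mu) = c0 (-mu)^(1 - d/2), for mu < 0 *)
Definition chi0 (d : nat) (c0 : R) (m : R) : R := c0 * Rpower (- m) (1 - INR d / 2).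

(* T_0^{ab} = 4 chi_mumu xi^a xi^b + 2 chi_mu g^{ab};  chi1 = chi_mu, chi2 = chi_mumu *)
Definition T0 (d : nat) (g : pt -> nat -> nat -> R) (ginv : pt -> nat -> nat -> R) (xi : pt -> nat -> R) (chi1 chi2 : R -> R) (x : pt) (a b : nat) : R :=
  4 * chi2 (mu d g xi x) * xi x a * xi x b + 2 * chi1 (mu d g xi x) * ginv x a b.

(* S_0^a = dchi^0/dxi_a - xi_b T_0^{ab}, with dchi^0/dxi_a = chi_mu * dmu/dxi_a
   = 2 chi_mu xi^a  (mu = g^{ab} xi_a xi_b) *)
Definition S0 (d : nat) (g ginv : pt -> nat -> nat -> R) (xi : pt -> nat -> R) (chi1 chi2 : R -> R) (x : pt) (a : nat) : R :=
  2 * chi1 (mu d g xi x) * xi x a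
  - sumd d (fun b => xi_low d g xi x b * T0 d g ginv xi chi1 chi2 x a b).

(* nabla_a T^{ab}, given dT c a b = partial_c T^{ab} at x *)
Definition div2 (d : nat) (ginv : pt -> nat -> nat -> R) (dg : pt -> nat -> nat -> nat -> R) (T : pt -> nat -> nat -> R) (dT : nat -> nat -> nat -> R)
    (x : pt) (b : nat) : R :=
  sumd d (fun a => dT a a b +
    sumd d (fun c => Gam d ginv dg x a a c * T x c b + Gam d ginv dg x b a c * T x a c)).

(* nabla_a V^a, given dV c a = partial_c V^a at x *)
Definition div1 (d : nat) (ginv : pt -> nat -> nat -> R) (dg : pt -> nat -> nat -> nat -> R) (V : pt -> nat -> R) (dV : nat -> nat -> R) (x : pt) : R :=
  sumd d (fun a => dV a a + sumd d (fun c => Gam d ginv dg x a a c * V x c)).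

(* Main.v *)
Require Import Defs.
From Stdlib Require Import Reals Lra Lia FunctionalExtensionality.
Open Scope R_scope.



Lemma sumd_ext n f g : (forall i, (i < n)%nat -> f i = g i) -> sumd n f = sumd n g.
Proof. induction n; simpl; intros H; auto. rewrite IHn by (intros; apply H; lia). rewrite H by lia. auto. Qed.
Lemma sumd_add n f g : sumd n (fun i => f i + g i) = sumd n f + sumd n g.
Proof. induction n; simpl; [ring|rewrite IHn; ring]. Qed.
Lemma sumd_sub n f g : sumd n (fun i => f i - g i) = sumd n f - sumd n g.
Proof. induction n; simpl; [ring|rewrite IHn; ring]. Qed.
Lemma sumd_mull n c f : sumd n (fun i => c * f i) = c * sumd n f.
Proof. induction n; simpl; [ring|rewrite IHn; ring]. Qed.
Lemma sumd_mulr n c f : sumd n (fun i => f i * c) = sumd n f * c.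
Proof. induction n; simpl; [ring|rewrite IHn; ring]. Qed.
Lemma sumd_0 n : sumd n (fun _ => 0) = 0.
Proof. induction n; simpl; [ring|rewrite IHn; ring]. Qed.
Lemma sumd_swap n m f : sumd n (fun i => sumd m (fun j => f i j)) = sumd m (fun j => sumd n (fun i => f i j)).
Proof. induction n; simpl. symmetry; apply sumd_0. rewrite IHn, <- sumd_add. auto. Qed.
Lemma kdelta_sym a b : kdelta a b = kdelta b a.
Proof. unfold kdelta. rewrite Nat.eqb_sym. auto. Qed.
Lemma sumd_kd n a f : (a < n)%nat -> sumd n (fun i => kdelta a i * f i) = f a.
Proof. induction n; intros H; simpl. lia. unfold kdelta at 2.
  destruct (Nat.eqb_spec a n). subst. rewrite sumd_ext with (g := fun _ => 0). rewrite sumd_0; ring.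
  intros i Hi. unfold kdelta. destruct (Nat.eqb_spec n i); [lia|ring].
  rewrite IHn by lia. ring. Qed.
Lemma sumd_kd' n a f : (a < n)%nat -> sumd n (fun i => f i * kdelta i a) = f a.
Proof. intros H. rewrite <- (sumd_kd n a f H). apply sumd_ext. intros; rewrite kdelta_sym; ring. Qed.
Lemma sumd_kdiag n : sumd n (fun i => kdelta i i) = INR n.
Proof. induction n; simpl. auto. rewrite IHn. unfold kdelta; rewrite Nat.eqb_refl. destruct n; simpl; ring. Qed.
Lemma sumd_nz n f : sumd n f <> 0 -> exists i, (i < n)%nat /\ f i <> 0.
Proof. induction n; simpl; intros H. lra. destruct (Req_dec (f n) 0).
  destruct IHn as [i [Hi Hf]]. intro; apply H; lra. exists i; split; auto; lia.
  exists n; split; auto. Qed.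

Lemma upd_same x c : upd x c (x c) = x.
Proof. apply functional_extensionality; intro i; unfold upd. destruct (Nat.eqb_spec i c); subst; auto. Qed.

Lemma deriv_local f f' x0 l eps : 0 < eps -> (forall y, Rabs (y - x0) < eps -> f y = f' y) ->
  derivable_pt_lim f' x0 l -> derivable_pt_lim f x0 l.
Proof. intros He Heq H e He'. destruct (H e He') as [del Hd].
  assert (Hp : 0 < Rmin del eps) by (apply Rmin_pos; [apply cond_pos|auto]).
  exists (mkposreal _ Hp). intros h Hh Hl. simpl in Hl.
  rewrite (Heq (x0 + h)), (Heq x0). apply Hd; auto. apply Rlt_le_trans with (1:=Hl); apply Rmin_l.
  rewrite Rminus_diag, Rabs_R0; auto.
  replace (x0 + h - x0) with h by ring. apply Rlt_le_trans with (1:=Hl); apply Rmin_r. Qed.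

Lemma pd_local f f' c x l eps : 0 < eps -> (forall h, Rabs (h - x c) < eps -> f (upd x c h) = f' (upd x c h)) ->
  has_pd f' c x l -> has_pd f c x l.
Proof. unfold has_pd; intros He Heq H. apply (deriv_local (fun h => f (upd x c h)) (fun h => f' (upd x c h)) (x c) l eps He Heq H). Qed.

Lemma pd_unique f c x l1 l2 : has_pd f c x l1 -> has_pd f c x l2 -> l1 = l2.
Proof. apply uniqueness_limite. Qed.

Lemma pd_val f c x l l' : has_pd f c x l -> l = l' -> has_pd f c x l'.
Proof. intros H ->; auto. Qed.

Lemma pd_const c x r : has_pd (fun _ => r) c x 0.
Proof. unfold has_pd. apply derivable_pt_lim_const. Qed.

Lemma pd_plus f g c x l1 l2 : has_pd f c x l1 -> has_pd g c x l2 -> has_pd (fun y => f y + g y) c x (l1 + l2).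
Proof. unfold has_pd; intros; apply (derivable_pt_lim_plus (fun h => f (upd x c h)) (fun h => g (upd x c h))); auto. Qed.
Lemma pd_minus f g c x l1 l2 : has_pd f c x l1 -> has_pd g c x l2 -> has_pd (fun y => f y - g y) c x (l1 - l2).
Proof. unfold has_pd; intros; apply (derivable_pt_lim_minus (fun h => f (upd x c h)) (fun h => g (upd x c h))); auto. Qed.
Lemma pd_mult f g c x l1 l2 : has_pd f c x l1 -> has_pd g c x l2 -> has_pd (fun y => f y * g y) c x (l1 * g x + f x * l2).
Proof. unfold has_pd; intros. pose proof (derivable_pt_lim_mult (fun h => f (upd x c h)) (fun h => g (upd x c h)) _ _ _ H H0).
  cbv beta in H1. rewrite upd_same in H1. exact H1. Qed.
Lemma pd_div f g c x l1 l2 : has_pd f c x l1 -> has_pd g c x l2 -> g x <> 0 ->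
  has_pd (fun y => f y / g y) c x ((l1 * g x - l2 * f x) / (g x)²).
Proof. unfold has_pd; intros. assert (H1' : g (upd x c (x c)) <> 0) by (rewrite upd_same; auto).
  pose proof (derivable_pt_lim_div (fun h => f (upd x c h)) (fun h => g (upd x c h)) _ _ _ H H0 H1').
  cbv beta in H2. rewrite upd_same in H2. exact H2. Qed.
Lemma pd_comp phi f c x l l' : has_pd f c x l -> derivable_pt_lim phi (f x) l' ->
  has_pd (fun y => phi (f y)) c x (l' * l).
Proof. unfold has_pd; intros. assert (H0' : derivable_pt_lim phi (f (upd x c (x c))) l') by (rewrite upd_same; auto).
  exact (derivable_pt_lim_comp (fun h => f (upd x c h)) phi _ _ _ H H0'). Qed.
Lemma pd_sumd n f l c x : (forall i, (i < n)%nat -> has_pd (fun y => f y i) c x (l i)) ->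
  has_pd (fun y => sumd n (fun i => f y i)) c x (sumd n l).
Proof. induction n; simpl; intros H. apply pd_const.
  apply pd_plus. apply IHn; intros; apply H; lia. apply H; lia. Qed.

Lemma open_upd d U x c : Defs.open_set d U -> U x -> exists eps, 0 < eps /\ forall h, Rabs (h - x c) < eps -> U (upd x c h).
Proof. intros HU Hx. destruct (HU x Hx) as [eps [He H]]. exists eps; split; auto.
  intros h Hh. apply H. intros i Hi. unfold upd. destruct (Nat.eqb_spec i c). subst; auto.
  rewrite Rminus_diag, Rabs_R0; auto. Qed.

Lemma swap_eq n m (F : nat -> nat -> R) (H : nat -> R) : (forall j, (j < m)%nat -> H j = sumd n (fun i => F i j)) ->
  sumd n (fun i => sumd m (fun j => F i j)) = sumd m H.
Proof. intros E. rewrite sumd_swap. apply sumd_ext; intros j Hj. rewrite E; auto. Qed.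



Lemma dl_val f x l l' : derivable_pt_lim f x l -> l = l' -> derivable_pt_lim f x l'.
Proof. intros H ->; auto. Qed.

Lemma dpow q m : m < 0 -> derivable_pt_lim (fun m => Rpower (-m) q) m (-(q * Rpower (-m) (q-1))).
Proof. intros Hm.
  assert (H1 : derivable_pt_lim (fun m => -m) m (-1)).
  { apply (derivable_pt_lim_opp id). apply derivable_pt_lim_id. }
  assert (H2 := derivable_pt_lim_power (-m) q ltac:(lra)).
  pose proof (derivable_pt_lim_comp (fun m => -m) (fun x => Rpower x q) _ _ _ H1 H2).
  unfold comp in H. eapply dl_val; [exact H|]. ring. Qed.

Lemma dcpow k q m : m < 0 -> derivable_pt_lim (fun m => k * Rpower (-m) q) m (- k * q * Rpower (-m) (q-1)).
Proof. intros Hm. eapply dl_val. apply derivable_pt_lim_scal. apply dpow; auto. ring. Qed.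

Definition pp (d : nat) := 1 - INR d / 2.

Lemma chi_facts d c0 (chi1 chi2 : R -> R) :
  (forall m, m < 0 -> derivable_pt_lim (chi0 d c0) m (chi1 m)) ->
  (forall m, m < 0 -> derivable_pt_lim chi1 m (chi2 m)) ->
  forall m, m < 0 ->
   chi1 m = - c0 * pp d * Rpower (-m) (pp d - 1) /\
   chi2 m = c0 * pp d * (pp d - 1) * Rpower (-m) (pp d - 2) /\
   derivable_pt_lim chi2 m (- (c0 * pp d * (pp d - 1)) * (pp d - 2) * Rpower (-m) (pp d - 2 - 1)).
Proof. intros H1 H2.
  assert (E1 : forall m, m < 0 -> chi1 m = - c0 * pp d * Rpower (-m) (pp d - 1)).
  { intros m Hm. eapply uniqueness_limite. apply H1; auto. unfold chi0. apply dcpow; auto. }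
  assert (E2 : forall m, m < 0 -> chi2 m = c0 * pp d * (pp d - 1) * Rpower (-m) (pp d - 2)).
  { intros m Hm. eapply uniqueness_limite. apply H2; auto.
    eapply deriv_local with (eps := -m). lra.
    intros y Hy. apply E1. apply Rabs_def2 in Hy. lra.
    eapply dl_val. apply dcpow; auto. replace (pp d - 1 - 1) with (pp d - 2) by ring. ring. }
  intros m Hm. split; [auto|split;[auto|]].
  eapply deriv_local with (eps := -m). lra.
  intros y Hy. apply E2. apply Rabs_def2 in Hy. lra.
  eapply dl_val. apply dcpow; auto. ring. Qed.

Lemma pp_ne d : (3 <= d)%nat -> pp d <> 0 /\ pp d - 1 <> 0 /\ pp d - 1 = - INR d / 2.
Proof. intros Hd. apply le_INR in Hd. simpl in Hd. unfold pp. repeat split; lra. Qed.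

Lemma chi3_rel d c0 m : m < 0 ->
  - (c0 * pp d * (pp d - 1)) * (pp d - 2) * Rpower (-m) (pp d - 2 - 1)
  = (c0 * pp d * (pp d - 1) * Rpower (-m) (pp d - 2)) * (pp d - 2) / m.
Proof. intros Hm. assert (E : Rpower (-m) (pp d - 2) = Rpower (-m) (pp d - 2 - 1) * (-m)).
  { rewrite <- (Rpower_1 (-m)) at 3 by lra. rewrite <- Rpower_plus. f_equal; ring. }
  rewrite E. field. lra. Qed.

Lemma Rpower_pos' x y : 0 < Rpower x y.
Proof. unfold Rpower. apply exp_pos. Qed.



Lemma Gi_sym d (G Gi : nat -> nat -> R) :
  (forall a b, (a < d)%nat -> (b < d)%nat -> G a b = G b a) ->
  (forall a c, (a < d)%nat -> (c < d)%nat -> sumd d (fun b => G a b * Gi b c) = kdelta a c) ->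
  forall a b, (a < d)%nat -> (b < d)%nat -> Gi a b = Gi b a.
Proof. intros HGs HGi a b Ha Hb. symmetry.
  transitivity (sumd d (fun e => sumd d (fun c => Gi c b * G c e) * Gi e a)).
  { rewrite <- (sumd_kd d b (fun e => Gi e a)) at 1 by auto. apply sumd_ext; intros e He.
      f_equal. rewrite kdelta_sym, <- HGi by auto. apply sumd_ext; intros. rewrite HGs by auto. ring. }
  transitivity (sumd d (fun c => Gi c b * sumd d (fun e => G c e * Gi e a))).
  { transitivity (sumd d (fun e => sumd d (fun c => Gi c b * G c e * Gi e a))).
    apply sumd_ext; intros; rewrite <- sumd_mulr; auto.
    apply swap_eq. intros. rewrite <- sumd_mull. apply sumd_ext; intros; ring. }
  rewrite <- (sumd_kd' d a (fun c => Gi c b)) by auto. apply sumd_ext; intros c Hc. rewrite HGi by auto. auto. Qed.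

Lemma GiG d (G Gi : nat -> nat -> R) :
  (forall a b, (a < d)%nat -> (b < d)%nat -> G a b = G b a) ->
  (forall a c, (a < d)%nat -> (c < d)%nat -> sumd d (fun b => G a b * Gi b c) = kdelta a c) ->
  forall a c, (a < d)%nat -> (c < d)%nat -> sumd d (fun b => Gi a b * G b c) = kdelta a c.
Proof. intros HGs HGi a c Ha Hc. rewrite kdelta_sym, <- HGi by auto. apply sumd_ext; intros.
  rewrite HGs, (Gi_sym d G Gi) by auto. ring. Qed.



Definition Hpt d (g ginv : pt -> nat -> nat -> R) (dg : pt -> nat -> nat -> nat -> R) x :=
  (forall a b, (a < d)%nat -> (b < d)%nat -> g x a b = g x b a) /\
  (forall a c, (a < d)%nat -> (c < d)%nat -> sumd d (fun b => g x a b * ginv x b c) = kdelta a c) /\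
  (forall c a b, (c < d)%nat -> (a < d)%nat -> (b < d)%nat -> dg x c a b = dg x c b a).

Lemma Hpt_Gis d g ginv dg x : Hpt d g ginv dg x -> forall a b, (a < d)%nat -> (b < d)%nat -> ginv x a b = ginv x b a.
Proof. intros [H1 [H2 _]]. apply (Gi_sym d (g x) (ginv x)); auto. Qed.
Lemma Hpt_GiG d g ginv dg x : Hpt d g ginv dg x -> forall a c, (a < d)%nat -> (c < d)%nat -> sumd d (fun b => ginv x a b * g x b c) = kdelta a c.
Proof. intros [H1 [H2 _]]. apply (GiG d (g x) (ginv x)); auto. Qed.

Lemma lowerG d g ginv dg x : Hpt d g ginv dg x -> forall b c a, (b < d)%nat -> (c < d)%nat -> (a < d)%nat ->
  sumd d (fun e => g x b e * Gam d ginv dg x e c a) = / 2 * (dg x c b a + dg x a b c - dg x b c a).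
Proof. intros [HGs [HGi HdG]] b c a Hb Hc Ha. unfold Gam.
  transitivity (/2 * sumd d (fun f => sumd d (fun e => g x b e * ginv x e f) * (dg x c f a + dg x a f c - dg x f c a))).
  { rewrite <- sumd_mull. transitivity (sumd d (fun e => sumd d (fun f => / 2 * (g x b e * ginv x e f * (dg x c f a + dg x a f c - dg x f c a))))).
    apply sumd_ext; intros. rewrite <- !sumd_mull. apply sumd_ext; intros; ring.
    apply swap_eq; intros. rewrite <- sumd_mulr, <- sumd_mull. apply sumd_ext; intros; ring. }
  f_equal. rewrite <- (sumd_kd d b (fun f => dg x c f a + dg x a f c - dg x f c a)) by auto.
  apply sumd_ext; intros. rewrite HGi by auto. auto. Qed.

Lemma Gam_sym d g ginv dg x : Hpt d g ginv dg x -> forall a b c, (b < d)%nat -> (c < d)%nat ->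
  Gam d ginv dg x a b c = Gam d ginv dg x a c b.
Proof. intros [HGs [HGi HdG]] a b c Hb Hc. unfold Gam. f_equal. apply sumd_ext; intros e He.
  rewrite (HdG e b c) by auto. ring. Qed.

Definition dmuF d (g : pt -> nat -> nat -> R) dg (xi : pt -> nat -> R) dxi x (c : nat) :=
  sumd d (fun a => sumd d (fun b => dg x c a b * xi x b + g x a b * dxi x c b) * xi x a + xi_low d g xi x a * dxi x c a).

Lemma metric_mu d g ginv dg xi dxi x : Hpt d g ginv dg x -> forall c, (c < d)%nat ->
  dmuF d g dg xi dxi x c = 2 * sumd d (fun a => xi_low d g xi x a * cov_xi d ginv dg xi dxi x c a).
Proof. intros H c Hc. pose proof H as [HGs [HGi HdG]]. unfold dmuF, cov_xi.
  set (S := sumd d (fun b => sumd d (fun e => xi x b * xi x e * dg x c b e))).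
  assert (E1 : sumd d (fun a => xi_low d g xi x a * sumd d (fun e => Gam d ginv dg x a c e * xi x e)) = / 2 * S).
  { transitivity (sumd d (fun b => sumd d (fun e => xi x b * xi x e * (/ 2 * (dg x c b e + dg x e b c - dg x b c e))))).
    { unfold xi_low. transitivity (sumd d (fun a => sumd d (fun b => sumd d (fun e => g x a b * xi x b * Gam d ginv dg x a c e * xi x e)))).
      apply sumd_ext; intros. rewrite <- sumd_mulr. apply sumd_ext; intros. rewrite <- sumd_mull. apply sumd_ext; intros; ring.
      apply swap_eq; intros b Hb. rewrite sumd_swap. apply sumd_ext; intros e He.
      rewrite <- (lowerG d g ginv dg x H) by auto. rewrite <- sumd_mull. apply sumd_ext; intros. rewrite HGs by auto. ring. }
    
    assert (E2 : sumd d (fun b => sumd d (fun e => xi x b * xi x e * dg x e b c)) = sumd d (fun b => sumd d (fun e => xi x b * xi x e * dg x b c e))).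
    { apply swap_eq; intros. apply sumd_ext; intros. rewrite HdG by auto. ring. }
    transitivity (/2 * (S + sumd d (fun b => sumd d (fun e => xi x b * xi x e * dg x e b c)) - sumd d (fun b => sumd d (fun e => xi x b * xi x e * dg x b c e)))).
    { unfold S. rewrite <- sumd_add, <- sumd_sub, <- sumd_mull. apply sumd_ext; intros. rewrite <- sumd_add, <- sumd_sub, <- sumd_mull. apply sumd_ext; intros. ring. }
    rewrite E2. ring. }
  assert (E3 : sumd d (fun a => sumd d (fun b => g x a b * dxi x c b) * xi x a) = sumd d (fun a => xi_low d g xi x a * dxi x c a)).
  { transitivity (sumd d (fun a => sumd d (fun b => g x a b * dxi x c b * xi x a))).
    apply sumd_ext; intros; rewrite sumd_mulr; auto.
    apply swap_eq; intros. unfold xi_low. rewrite <- sumd_mulr. apply sumd_ext; intros. rewrite HGs by auto. ring. }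
  assert (E4 : sumd d (fun a => sumd d (fun b => dg x c a b * xi x b) * xi x a) = S).
  { unfold S. apply sumd_ext; intros. rewrite <- sumd_mulr. apply sumd_ext; intros; ring. }
  transitivity (sumd d (fun a => sumd d (fun b => dg x c a b * xi x b) * xi x a) + sumd d (fun a => sumd d (fun b => g x a b * dxi x c b) * xi x a) + sumd d (fun a => xi_low d g xi x a * dxi x c a)).
  { rewrite <- !sumd_add. apply sumd_ext; intros. rewrite sumd_add. ring. }
  rewrite E3, E4. transitivity (2 * (sumd d (fun a => xi_low d g xi x a * dxi x c a) + sumd d (fun a => xi_low d g xi x a * sumd d (fun e => Gam d ginv dg x a c e * xi x e)))).
  rewrite E1. lra. f_equal. rewrite <- sumd_add. apply sumd_ext; intros; ring. Qed.

Lemma sumd_opp n f : sumd n (fun i => - f i) = - sumd n f.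
Proof. induction n; simpl; [ring|rewrite IHn; ring]. Qed.

Lemma dGi_formula d g ginv dg x (L : nat -> nat -> nat -> R) c : Hpt d g ginv dg x -> (c < d)%nat ->
  (forall a e, (a < d)%nat -> (e < d)%nat -> sumd d (fun b => dg x c a b * ginv x b e + g x a b * L c b e) = 0) ->
  forall f e, (f < d)%nat -> (e < d)%nat ->
  L c f e = - sumd d (fun a => sumd d (fun b => ginv x f a * dg x c a b * ginv x b e)).
Proof. intros H Hc HL f e Hf He.
  transitivity (sumd d (fun b => sumd d (fun a => ginv x f a * g x a b) * L c b e)).
  { rewrite <- (sumd_kd d f (fun b => L c b e)) at 1 by auto. apply sumd_ext; intros. rewrite (Hpt_GiG d g ginv dg x H) by auto. auto. }
  transitivity (sumd d (fun a => ginv x f a * sumd d (fun b => g x a b * L c b e))).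
  { transitivity (sumd d (fun b => sumd d (fun a => ginv x f a * g x a b * L c b e))).
    apply sumd_ext; intros; rewrite sumd_mulr; auto.
    apply swap_eq; intros. rewrite <- sumd_mull. apply sumd_ext; intros; ring. }
  rewrite <- sumd_opp. apply sumd_ext; intros a Ha.
  assert (E : sumd d (fun b => g x a b * L c b e) = - sumd d (fun b => dg x c a b * ginv x b e)).
  { pose proof (HL a e Ha He) as Z. rewrite sumd_add in Z. lra. }
  rewrite E. transitivity (- (ginv x f a * sumd d (fun b => dg x c a b * ginv x b e))). ring.
  f_equal. rewrite <- sumd_mull. apply sumd_ext; intros; ring. Qed.

Definition dGiE d (ginv : pt -> nat -> nat -> R) (dg : pt -> nat -> nat -> nat -> R) x (c a b : nat) :=
  - sumd d (fun e => sumd d (fun f => ginv x a e * dg x c e f * ginv x f b)).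

Lemma divGi d g ginv dg x : Hpt d g ginv dg x -> forall b, (b < d)%nat ->
  sumd d (fun a => dGiE d ginv dg x a a b + sumd d (fun c => Gam d ginv dg x a a c * ginv x c b + Gam d ginv dg x b a c * ginv x a c)) = 0.
Proof. intros H b Hb. pose proof H as [HGs [HGi HdG]].
  rewrite <- (sumd_0 d). apply sumd_ext; intros a Ha.
  assert (E1 : dGiE d ginv dg x a a b = sumd d (fun e => sumd d (fun c => ginv x a e * ginv x c b * (- dg x a e c)))).
  { unfold dGiE. rewrite <- sumd_opp. apply sumd_ext; intros. rewrite <- sumd_opp. apply sumd_ext; intros. ring. }
  assert (E2 : sumd d (fun c => Gam d ginv dg x a a c * ginv x c b) = sumd d (fun e => sumd d (fun c => ginv x a e * ginv x c b * (/2 * (dg x a e c + dg x c e a - dg x e a c))))).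
  { unfold Gam. transitivity (sumd d (fun c => sumd d (fun e => ginv x a e * ginv x c b * (/2 * (dg x a e c + dg x c e a - dg x e a c))))).
    apply sumd_ext; intros. rewrite <- sumd_mull, <- sumd_mulr. apply sumd_ext; intros; ring.
    apply swap_eq; intros. auto. }
  assert (E3 : sumd d (fun c => Gam d ginv dg x b a c * ginv x a c) = sumd d (fun e => sumd d (fun c => ginv x a e * ginv x c b * (/2 * (dg x a c e + dg x e c a - dg x c a e))))).
  { unfold Gam. apply sumd_ext; intros e He. rewrite <- sumd_mull, <- sumd_mulr. apply sumd_ext; intros c Hc.
    rewrite (Hpt_Gis d g ginv dg x H b c) by auto. ring. }
  rewrite sumd_add, E1, E2, E3, <- !sumd_add. rewrite <- (sumd_0 d). apply sumd_ext; intros e He.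
  rewrite <- !sumd_add. rewrite <- (sumd_0 d). apply sumd_ext; intros c Hc.
  rewrite (HdG a c e), (HdG e c a), (HdG c a e) by auto. field. Qed.

Definition dTF d (g ginv : pt -> nat -> nat -> R) dg (xi : pt -> nat -> R) dxi (chi1 chi2 : R -> R) (C3 : R) (m : nat -> R) x (c a b : nat) :=
  4 * C3 * m c * xi x a * xi x b + 4 * chi2 (mu d g xi x) * (dxi x c a * xi x b + xi x a * dxi x c b)
  + 2 * chi2 (mu d g xi x) * m c * ginv x a b + 2 * chi1 (mu d g xi x) * dGiE d ginv dg x c a b.

Lemma divT d g ginv dg xi dxi chi1 chi2 C3 m x : Hpt d g ginv dg x -> forall b, (b < d)%nat ->
  div2 d ginv dg (T0 d g ginv xi chi1 chi2) (dTF d g ginv dg xi dxi chi1 chi2 C3 m x) x b =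
  4 * C3 * sumd d (fun a => xi x a * m a) * xi x b
  + 4 * chi2 (mu d g xi x) * (Dv d ginv dg xi dxi x * xi x b + xidot d ginv dg xi dxi x b)
  + 2 * chi2 (mu d g xi x) * sumd d (fun c => ginv x b c * m c).
Proof. intros H b Hb. set (A := chi2 (mu d g xi x)). set (B := chi1 (mu d g xi x)).
  unfold div2, T0, dTF. fold A B.
  set (P := fun a => 4 * C3 * xi x b * (xi x a * m a) + 4 * A * xi x b * cov_xi d ginv dg xi dxi x a a
     + 4 * A * (xi x a * cov_xi d ginv dg xi dxi x a b) + 2 * A * (ginv x b a * m a)
     + 2 * B * (dGiE d ginv dg x a a b + sumd d (fun c => Gam d ginv dg x a a c * ginv x c b + Gam d ginv dg x b a c * ginv x a c))).
  transitivity (sumd d P).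
  { apply sumd_ext; intros a Ha. unfold P, cov_xi.
    assert (E : sumd d (fun c => Gam d ginv dg x a a c * (4 * A * xi x c * xi x b + 2 * B * ginv x c b) +
          Gam d ginv dg x b a c * (4 * A * xi x a * xi x c + 2 * B * ginv x a c)) =
        4 * A * xi x b * sumd d (fun c => Gam d ginv dg x a a c * xi x c) +
        4 * A * xi x a * sumd d (fun c => Gam d ginv dg x b a c * xi x c) +
        2 * B * sumd d (fun c => Gam d ginv dg x a a c * ginv x c b + Gam d ginv dg x b a c * ginv x a c)).
    { rewrite <- !sumd_mull, <- !sumd_add. apply sumd_ext; intros; ring. }
    rewrite E, (Hpt_Gis d g ginv dg x H b a) by auto. ring. }
  unfold P. rewrite !sumd_add, !sumd_mull, (divGi d g ginv dg x H b Hb).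
  unfold Dv, xidot. ring. Qed.



Lemma XlGi d g ginv dg xi x : Hpt d g ginv dg x -> forall c, (c < d)%nat ->
  sumd d (fun b => xi_low d g xi x b * ginv x b c) = xi x c.
Proof. intros H c Hc. pose proof H as [HGs [HGi HdG]]. unfold xi_low.
  transitivity (sumd d (fun e => xi x e * sumd d (fun b => g x e b * ginv x b c))).
  { transitivity (sumd d (fun b => sumd d (fun e => g x b e * xi x e * ginv x b c))).
    apply sumd_ext; intros; rewrite sumd_mulr; auto.
    apply swap_eq; intros. rewrite <- sumd_mull. apply sumd_ext; intros. rewrite HGs by auto. ring. }
  rewrite <- (sumd_kd' d c (fun e => xi x e)) by auto. apply sumd_ext; intros. rewrite HGi by auto. auto. Qed.

Lemma Xl_xidot d g ginv dg xi dxi x : Hpt d g ginv dg x ->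
  sumd d (fun b => xi_low d g xi x b * xidot d ginv dg xi dxi x b) = / 2 * sumd d (fun a => xi x a * dmuF d g dg xi dxi x a).
Proof. intros H. unfold xidot.
  transitivity (sumd d (fun a => xi x a * sumd d (fun b => xi_low d g xi x b * cov_xi d ginv dg xi dxi x a b))).
  { transitivity (sumd d (fun b => sumd d (fun a => xi_low d g xi x b * (xi x a * cov_xi d ginv dg xi dxi x a b)))).
    apply sumd_ext; intros; rewrite sumd_mull; auto.
    apply swap_eq; intros. rewrite <- sumd_mull. apply sumd_ext; intros. ring. }
  rewrite <- sumd_mull. apply sumd_ext; intros a Ha. rewrite (metric_mu d g ginv dg xi dxi x H a Ha). field. Qed.

Lemma part_i_alg d g ginv dg xi dxi x (A : R) : Hpt d g ginv dg x -> (3 <= d)%nat ->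
  mu d g xi x < 0 -> A <> 0 ->
  (forall b, (b < d)%nat -> 4 * (A * (pp d - 2) / mu d g xi x) * sumd d (fun a => xi x a * dmuF d g dg xi dxi x a) * xi x b
     + 4 * A * (Dv d ginv dg xi dxi x * xi x b + xidot d ginv dg xi dxi x b)
     + 2 * A * sumd d (fun c => ginv x b c * dmuF d g dg xi dxi x c) = 0) ->
  let mudot := sumd d (fun a => xi x a * dmuF d g dg xi dxi x a) in
  mudot / mu d g xi x = 2 * Dv d ginv dg xi dxi x / INR d /\
  forall b, (b < d)%nat -> xidot d ginv dg xi dxi x b =
     (mudot / mu d g xi x) * xi x b - / 2 * sumd d (fun c => ginv x b c * dmuF d g dg xi dxi x c).
Proof. intros H Hd Hmu HA HE mudot.
  set (M := mu d g xi x) in *. set (D := Dv d ginv dg xi dxi x) in *.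
  assert (Hdn : 3 <= INR d) by (apply le_INR in Hd; simpl in Hd; lra).
  assert (EB : forall b, (b < d)%nat -> xidot d ginv dg xi dxi x b =
     - ((pp d - 2) * mudot / M + D) * xi x b - / 2 * sumd d (fun c => ginv x b c * dmuF d g dg xi dxi x c)).
  { intros b Hb. specialize (HE b Hb). fold mudot in HE. 
    assert (Z : 4 * A * (xidot d ginv dg xi dxi x b + ((pp d - 2) * mudot / M + D) * xi x b + / 2 * sumd d (fun c => ginv x b c * dmuF d g dg xi dxi x c)) = 0).
    { rewrite <- HE. field. lra. }
    apply Rmult_integral in Z. destruct Z as [Z|Z]; [lra|]. lra. }
  assert (DS : sumd d (fun b => sumd d (fun c => xi_low d g xi x b * (ginv x b c * dmuF d g dg xi dxi x c))) = mudot).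
  { unfold mudot. apply swap_eq; intros c Hc. rewrite <- (XlGi d g ginv dg xi x H c Hc) at 1. rewrite <- sumd_mulr.
    apply sumd_ext; intros; ring. }
  assert (C1 : sumd d (fun b => xi_low d g xi x b * xidot d ginv dg xi dxi x b) =
     - ((pp d - 2) * mudot / M + D) * M - / 2 * mudot).
  { transitivity (sumd d (fun b => - ((pp d - 2) * mudot / M + D) * (xi_low d g xi x b * xi x b) -
       / 2 * sumd d (fun c => xi_low d g xi x b * (ginv x b c * dmuF d g dg xi dxi x c)))).
    apply sumd_ext; intros b Hb. rewrite EB by auto. rewrite sumd_mull. field. lra.
    rewrite sumd_sub, !sumd_mull, DS. unfold M, mu. auto. }
  rewrite Xl_xidot in C1 by auto. fold mudot in C1.
  assert (C2 : / 2 * mudot = - (pp d - 2) * mudot - D * M - / 2 * mudot).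
  { etransitivity; [exact C1|]. field. lra. }
  assert (C3 : mudot * INR d = 2 * D * M) by (unfold pp in C2; nra).
  assert (Em : mudot = 2 * D * M / INR d) by (apply (Rmult_eq_reg_r (INR d)); [rewrite C3; field|]; lra).
  assert (R1 : mudot / M = 2 * D / INR d) by (rewrite Em; field; lra).
  split; auto. intros b Hb. rewrite EB by auto. rewrite R1. f_equal. f_equal.
  replace ((pp d - 2) * mudot / M) with ((pp d - 2) * (mudot / M)) by (field; lra). rewrite R1. unfold pp. field. lra. Qed.

Lemma S0_eq d g ginv xi chi1 chi2 y :
  (forall a b, (a < d)%nat -> (b < d)%nat -> g y a b = g y b a) ->
  (forall a c, (a < d)%nat -> (c < d)%nat -> sumd d (fun b => g y a b * ginv y b c) = kdelta a c) ->
  forall a, (a < d)%nat -> S0 d g ginv xi chi1 chi2 y a = - 4 * mu d g xi y * chi2 (mu d g xi y) * xi y a.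
Proof. intros HGs HGi a Ha.
  assert (H : Hpt d g ginv (fun _ _ _ _ => 0) y) by (repeat split; auto).
  unfold S0, T0.
  transitivity (2 * chi1 (mu d g xi y) * xi y a - (4 * chi2 (mu d g xi y) * xi y a * sumd d (fun b => xi_low d g xi y b * xi y b)
     + 2 * chi1 (mu d g xi y) * sumd d (fun b => xi_low d g xi y b * ginv y b a))).
  { f_equal. rewrite <- !sumd_mull, <- sumd_add. apply sumd_ext; intros b Hb.
    rewrite (Hpt_Gis d g ginv _ y H a b) by auto. ring. }
  rewrite (XlGi d g ginv _ xi y H a Ha). unfold mu. ring. Qed.

Definition dSF d g (xi : pt -> nat -> R) (dxi : pt -> nat -> nat -> R) (chi2 : R -> R) (C3 : R) (m : nat -> R) x (c a : nat) :=
  -4 * ((chi2 (mu d g xi x) + mu d g xi x * C3) * m c * xi x a + mu d g xi x * chi2 (mu d g xi x) * dxi x c a).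

Lemma divS d g ginv dg xi dxi chi1 chi2 C3 m x : Hpt d g ginv dg x ->
  div1 d ginv dg (S0 d g ginv xi chi1 chi2) (dSF d g xi dxi chi2 C3 m x) x =
  -4 * ((chi2 (mu d g xi x) + mu d g xi x * C3) * sumd d (fun a => xi x a * m a) + mu d g xi x * chi2 (mu d g xi x) * Dv d ginv dg xi dxi x).
Proof. intros H. pose proof H as [HGs [HGi HdG]]. unfold div1, Dv, cov_xi.
  set (A := chi2 (mu d g xi x)). set (M := mu d g xi x).
  transitivity (sumd d (fun a => -4 * ((A + M * C3) * (xi x a * m a) + M * A * (dxi x a a + sumd d (fun c => Gam d ginv dg x a a c * xi x c))))).
  { apply sumd_ext; intros a Ha. unfold dSF. fold A M.
    assert (E : sumd d (fun c => Gam d ginv dg x a a c * S0 d g ginv xi chi1 chi2 x c) = -4 * M * A * sumd d (fun c => Gam d ginv dg x a a c * xi x c)).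
    { rewrite <- sumd_mull. apply sumd_ext; intros c Hc. rewrite S0_eq by auto. fold A M. ring. }
    rewrite E. ring. }
  rewrite sumd_mull, sumd_add, !sumd_mull. auto. Qed.

Lemma part_iii_alg d g ginv dg xi dxi x t s : Hpt d g ginv dg x -> (3 <= d)%nat -> mu d g xi x < 0 ->
  (forall b, (b < d)%nat -> xidot d ginv dg xi dxi x b =
     (2 * Dv d ginv dg xi dxi x / INR d) * xi x b - / 2 * sumd d (fun c => ginv x b c * dmuF d g dg xi dxi x c)) ->
  (forall a b, (a < d)%nat -> (b < d)%nat ->
     / 2 * (cov_xi_low d g ginv dg xi dxi x a b + cov_xi_low d g ginv dg xi dxi x b a)
     = t * g x a b + s * xi_low d g xi x a * xi_low d g xi x b) ->
  s = 0 /\ t = Dv d ginv dg xi dxi x / INR d.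
Proof. intros H Hd Hmu Hxd HK. pose proof H as [HGs [HGi HdG]].
  set (D := Dv d ginv dg xi dxi x) in *. set (M := mu d g xi x) in *.
  set (m := dmuF d g dg xi dxi x) in *.
  set (Xl := xi_low d g xi x) in *.
  set (cov := cov_xi d ginv dg xi dxi x) in *.
  assert (Hdn : 3 <= INR d) by (apply le_INR in Hd; simpl in Hd; lra).
  assert (J1 : forall b, (b < d)%nat -> sumd d (fun a => xi x a * cov_xi_low d g ginv dg xi dxi x a b) = (2 * D / INR d) * Xl b - / 2 * m b).
  { intros b Hb. unfold cov_xi_low. fold cov.
    transitivity (sumd d (fun c => g x b c * xidot d ginv dg xi dxi x c)).
    { transitivity (sumd d (fun a => sumd d (fun c => g x b c * (xi x a * cov a c)))).
      apply sumd_ext; intros. rewrite <- sumd_mull. apply sumd_ext; intros; ring.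
      apply swap_eq; intros. unfold xidot. fold cov. rewrite <- sumd_mull. auto. }
    transitivity (sumd d (fun c => (2 * D / INR d) * (g x b c * xi x c) - / 2 * sumd d (fun e => g x b c * ginv x c e * m e))).
    { apply sumd_ext; intros c Hc. rewrite Hxd by auto. fold m D. rewrite <- sumd_mull, <- sumd_mull.
      rewrite Rmult_minus_distr_l. f_equal. ring. rewrite <- sumd_mull. apply sumd_ext; intros. ring. }
    rewrite sumd_sub, !sumd_mull. f_equal. f_equal.
    transitivity (sumd d (fun e => sumd d (fun c => g x b c * ginv x c e) * m e)).
    { apply swap_eq; intros. rewrite <- sumd_mulr. auto. }
    rewrite <- (sumd_kd d b m) by auto. apply sumd_ext; intros. rewrite HGi by auto. auto. }
  assert (J2 : forall b, (b < d)%nat -> sumd d (fun a => xi x a * cov_xi_low d g ginv dg xi dxi x b a) = / 2 * m b).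
  { intros b Hb. unfold m. rewrite (metric_mu d g ginv dg xi dxi x H b Hb). fold Xl cov. unfold cov_xi_low. fold cov.
    transitivity (sumd d (fun a => sumd d (fun c => xi x a * g x a c * cov b c))).
    apply sumd_ext; intros. rewrite <- sumd_mull. apply sumd_ext; intros; ring.
    rewrite <- Rmult_assoc, Rinv_l, Rmult_1_l by lra.
    apply swap_eq; intros. unfold Xl, xi_low. rewrite <- sumd_mulr. apply sumd_ext; intros. rewrite HGs by auto. ring. }
  assert (E1 : t + s * M = D / INR d).
  { assert (Z : forall b, (b < d)%nat -> (t + s * M - D / INR d) * Xl b = 0).
    { intros b Hb.
      assert (L : sumd d (fun a => xi x a * (/ 2 * (cov_xi_low d g ginv dg xi dxi x a b + cov_xi_low d g ginv dg xi dxi x b a)))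
         = / 2 * ((2 * D / INR d) * Xl b - / 2 * m b + / 2 * m b)).
      { rewrite <- J1, <- J2 by auto. rewrite <- sumd_add, <- sumd_mull. apply sumd_ext; intros; ring. }
      assert (Rr : sumd d (fun a => xi x a * (/ 2 * (cov_xi_low d g ginv dg xi dxi x a b + cov_xi_low d g ginv dg xi dxi x b a)))
         = t * Xl b + s * M * Xl b).
      { transitivity (sumd d (fun a => t * (g x b a * xi x a) + s * Xl b * (Xl a * xi x a))).
        apply sumd_ext; intros a Ha. rewrite HK by auto. rewrite (HGs a b) by auto. ring.
        rewrite sumd_add, !sumd_mull. unfold M, mu, Xl, xi_low. ring. }
      rewrite Rr in L. rewrite Rmult_minus_distr_r. apply Rminus_diag_eq. rewrite Rmult_plus_distr_r, L. field. lra. }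
    assert (HM : sumd d (fun b => Xl b * xi x b) <> 0) by (change (M <> 0); lra).
    destruct (sumd_nz _ _ HM) as [b [Hb Hb']].
    specialize (Z b Hb). apply Rmult_integral in Z. destruct Z as [Z|Z]; [lra|].
    exfalso; apply Hb'; rewrite Z; ring. }
  assert (P : forall a, (a < d)%nat -> sumd d (fun b => ginv x a b * sumd d (fun c => g x b c * cov a c)) = cov a a).
  { intros a Ha. transitivity (sumd d (fun c => sumd d (fun b => ginv x a b * g x b c) * cov a c)).
    { transitivity (sumd d (fun b => sumd d (fun c => ginv x a b * g x b c * cov a c))).
      apply sumd_ext; intros. rewrite <- sumd_mull. apply sumd_ext; intros; ring.
      apply swap_eq; intros. rewrite <- sumd_mulr. auto. }
    rewrite <- (sumd_kd d a (fun c => cov a c)) by auto. apply sumd_ext; intros. rewrite (Hpt_GiG d g ginv dg x H) by auto. auto. }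
  assert (E2 : t * INR d + s * M = D).
  { assert (L : sumd d (fun a => sumd d (fun b => ginv x a b * (/ 2 * (cov_xi_low d g ginv dg xi dxi x a b + cov_xi_low d g ginv dg xi dxi x b a)))) = D).
    { transitivity (/2 * (sumd d (fun a => sumd d (fun b => ginv x a b * cov_xi_low d g ginv dg xi dxi x a b)) + sumd d (fun a => sumd d (fun b => ginv x a b * cov_xi_low d g ginv dg xi dxi x b a)))).
      { rewrite <- sumd_add, <- sumd_mull. apply sumd_ext; intros. rewrite <- sumd_add, <- sumd_mull. apply sumd_ext; intros. ring. }
      assert (T1 : sumd d (fun a => sumd d (fun b => ginv x a b * cov_xi_low d g ginv dg xi dxi x a b)) = D).
      { unfold D, Dv. fold cov. apply sumd_ext; intros a Ha. rewrite <- P by auto. auto. }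
      assert (T2 : sumd d (fun a => sumd d (fun b => ginv x a b * cov_xi_low d g ginv dg xi dxi x b a)) = D).
      { unfold D, Dv. fold cov. apply swap_eq; intros b Hb. rewrite <- P by auto. apply sumd_ext; intros.
        rewrite (Hpt_Gis d g ginv dg x H b) by auto. auto. }
      rewrite T1, T2. field. }
    rewrite <- L. 
    transitivity (sumd d (fun a => t * sumd d (fun b => ginv x a b * g x b a) + s * Xl a * sumd d (fun b => Xl b * ginv x b a))).
    { rewrite sumd_add, !sumd_mull. f_equal. f_equal. rewrite <- sumd_kdiag. apply sumd_ext; intros. rewrite (Hpt_GiG d g ginv dg x H) by auto. auto.
      unfold M, mu, Xl. rewrite <- sumd_mull. apply sumd_ext; intros. rewrite (XlGi d g ginv dg xi x H) by auto. ring. }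
    apply sumd_ext; intros a Ha. rewrite <- !sumd_mull, <- sumd_add. apply sumd_ext; intros b Hb.
    rewrite HK by auto. rewrite (HGs a b), (Hpt_Gis d g ginv dg x H b a) by auto. ring. }
  assert (Hs : s * M = 0).
  { assert (Q : t * (INR d - 1) = D / INR d * (INR d - 1)).
    { replace (t * (INR d - 1)) with (t * INR d - t) by ring. replace (D / INR d * (INR d - 1)) with (D - D / INR d) by (field; lra). lra. }
    apply Rmult_eq_reg_r in Q; [|lra]. lra. }
  apply Rmult_integral in Hs. destruct Hs as [Hs|Hs]; [|lra]. split; auto. rewrite Hs in E1. lra. Qed.



Lemma L_Hpt d U g ginv dg x : spacetime d U g ginv dg -> U x -> Hpt d g ginv dg x.
Proof. intros [HU Hall] Hx. destruct (Hall x Hx) as [HGs [HGi [_ Hdg]]].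
  split; [auto|split;[auto|]]. intros c a b Hc Ha Hb.
  destruct (open_upd d U x c HU Hx) as [eps [He Heps]].
  apply (pd_unique (fun y => g y a b) c x); [apply Hdg; auto|].
  apply (pd_local _ (fun y => g y b a) c x _ eps He); [|apply Hdg; auto].
  intros h Hh. destruct (Hall _ (Heps h Hh)) as [HGs' _]. apply HGs'; auto. Qed.

Lemma L_pdxl d U g ginv dg xi dxi x a c : spacetime d U g ginv dg -> vector_field d U xi dxi -> U x ->
  (a < d)%nat -> (c < d)%nat ->
  has_pd (fun y => xi_low d g xi y a) c x (sumd d (fun b => dg x c a b * xi x b + g x a b * dxi x c b)).
Proof. intros [HU Hall] Hvf Hx Ha Hc. destruct (Hall x Hx) as [_ [_ [_ Hdg]]].
  unfold xi_low. apply (pd_sumd d (fun y b => g y a b * xi y b)). intros b Hb.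
  apply (pd_mult (fun y => g y a b) (fun y => xi y b)). apply Hdg; auto. apply Hvf; auto. Qed.

Lemma L_pdmu d U g ginv dg xi dxi x c : spacetime d U g ginv dg -> vector_field d U xi dxi -> U x ->
  (c < d)%nat -> has_pd (mu d g xi) c x (dmuF d g dg xi dxi x c).
Proof. intros Hs Hvf Hx Hc. unfold mu, dmuF. apply (pd_sumd d (fun y a => xi_low d g xi y a * xi y a)). intros a Ha.
  apply (pd_mult (fun y => xi_low d g xi y a) (fun y => xi y a)). eapply L_pdxl; eauto. apply Hvf; auto. Qed.

Definition C3f d c0 m := - (c0 * pp d * (pp d - 1)) * (pp d - 2) * Rpower (-m) (pp d - 2 - 1).

Lemma chi1_nz d c0 chi1 chi2 : (3 <= d)%nat -> c0 <> 0 ->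
  (forall m, m < 0 -> derivable_pt_lim (chi0 d c0) m (chi1 m)) ->
  (forall m, m < 0 -> derivable_pt_lim chi1 m (chi2 m)) ->
  forall m, m < 0 -> chi1 m <> 0 /\ chi2 m <> 0.
Proof. intros Hd Hc0 H1 H2 m Hm. destruct (chi_facts d c0 chi1 chi2 H1 H2 m Hm) as [E1 [E2 _]].
  destruct (pp_ne d Hd) as [P1 [P2 _]]. rewrite E1, E2.
  pose proof (Rpower_pos' (-m) (pp d - 1)). pose proof (Rpower_pos' (-m) (pp d - 2)).
  split; repeat apply Rmult_integral_contrapositive_currified; lra. Qed.

Lemma div2_ext d ginv dg T dT1 dT2 x b : (forall c a b, (c < d)%nat -> (a < d)%nat -> (b < d)%nat -> dT1 c a b = dT2 c a b) ->
  (b < d)%nat -> div2 d ginv dg T dT1 x b = div2 d ginv dg T dT2 x b.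
Proof. intros H Hb. unfold div2. apply sumd_ext; intros a Ha. rewrite H by auto. auto. Qed.

Lemma L_div d c0 chi1 chi2 U g ginv dg xi dxi x (dT : nat -> nat -> nat -> R) :
  (3 <= d)%nat -> c0 <> 0 ->
  (forall m, m < 0 -> derivable_pt_lim (chi0 d c0) m (chi1 m)) ->
  (forall m, m < 0 -> derivable_pt_lim chi1 m (chi2 m)) ->
  spacetime d U g ginv dg -> vector_field d U xi dxi ->
  (forall x, U x -> mu d g xi x < 0) -> U x ->
  (forall a b c, (a < d)%nat -> (b < d)%nat -> (c < d)%nat ->
         has_pd (fun y => T0 d g ginv xi chi1 chi2 y a b) c x (dT c a b)) ->
  forall c a b, (c < d)%nat -> (a < d)%nat -> (b < d)%nat ->
  dT c a b = dTF d g ginv dg xi dxi chi1 chi2 (C3f d c0 (mu d g xi x)) (dmuF d g dg xi dxi x) x c a b.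
Proof. intros Hd Hc0 H1 H2 Hs Hvf Htl Hx HdT.
  pose proof Hs as [HU Hall]. destruct (Hall x Hx) as [HGs [HGi [_ Hdg]]].
  pose proof (L_Hpt d U g ginv dg x Hs Hx) as HP.
  set (M := mu d g xi x). assert (HM : M < 0) by (apply Htl; auto).
  destruct (chi_facts d c0 chi1 chi2 H1 H2 M HM) as [_ [_ D2]].
  set (A := chi2 M). set (B := chi1 M). set (C3 := C3f d c0 M).
  assert (HB : B <> 0) by (apply (chi1_nz d c0 chi1 chi2); auto).
  set (m := dmuF d g dg xi dxi x).
  assert (Pmu : forall c, (c < d)%nat -> has_pd (mu d g xi) c x (m c)) by (intros; eapply L_pdmu; eauto).
  assert (P2 : forall c, (c < d)%nat -> has_pd (fun y => chi2 (mu d g xi y)) c x (C3 * m c)).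
  { intros c Hc. apply (pd_comp chi2 (mu d g xi) c x (m c) C3). apply Pmu; auto. exact D2. }
  assert (P1 : forall c, (c < d)%nat -> has_pd (fun y => chi1 (mu d g xi y)) c x (A * m c)).
  { intros c Hc. apply (pd_comp chi1 (mu d g xi) c x (m c) A). apply Pmu; auto. apply H2; auto. }
  assert (Pxx : forall c a b, (c < d)%nat -> (a < d)%nat -> (b < d)%nat ->
     has_pd (fun y => 4 * chi2 (mu d g xi y) * xi y a * xi y b) c x
       (4 * (C3 * m c * xi x a * xi x b + A * (dxi x c a * xi x b + xi x a * dxi x c b)))).
  { intros c a b Hc Ha Hb. eapply pd_val.
    apply pd_mult; [apply pd_mult; [apply pd_mult; [apply pd_const| apply P2; auto]|apply Hvf; auto]|apply Hvf; auto].
    cbv beta. fold M A. ring. }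
  set (Lg := fun c a b => ((dT c a b - 4 * (C3 * m c * xi x a * xi x b + A * (dxi x c a * xi x b + xi x a * dxi x c b))) * (2 * B)
        - (2 * (A * m c)) * (T0 d g ginv xi chi1 chi2 x a b - 4 * chi2 M * xi x a * xi x b)) / (2 * B)²).
  assert (PG : forall c a b, (c < d)%nat -> (a < d)%nat -> (b < d)%nat -> has_pd (fun y => ginv y a b) c x (Lg c a b)).
  { intros c a b Hc Ha Hb. destruct (open_upd d U x c HU Hx) as [eps [He Heps]].
    apply (pd_local _ (fun y => (T0 d g ginv xi chi1 chi2 y a b - 4 * chi2 (mu d g xi y) * xi y a * xi y b) / (2 * chi1 (mu d g xi y))) c x _ eps He).
    { intros h Hh. pose proof (Heps h Hh) as Hu. pose proof (Htl _ Hu) as Hm.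
      destruct (chi1_nz d c0 chi1 chi2 Hd Hc0 H1 H2 _ Hm) as [Hn _]. unfold T0. field. auto. }
    unfold Lg. apply pd_div. apply pd_minus. apply HdT; auto. apply Pxx; auto.
    eapply pd_val. apply pd_mult. apply pd_const. apply P1; auto. cbv beta. fold M B. ring. fold M B. lra. }
  assert (PR : forall c a e, (c < d)%nat -> (a < d)%nat -> (e < d)%nat ->
     sumd d (fun b => dg x c a b * ginv x b e + g x a b * Lg c b e) = 0).
  { intros c a e Hc Ha He. destruct (open_upd d U x c HU Hx) as [eps [Hep Heps]].
    apply (pd_unique (fun y => sumd d (fun b => g y a b * ginv y b e)) c x).
    - apply (pd_sumd d (fun y b => g y a b * ginv y b e)). intros b Hb.
      apply (pd_mult (fun y => g y a b) (fun y => ginv y b e)). apply Hdg; auto. apply PG; auto.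
    - apply (pd_local _ (fun _ => kdelta a e) c x _ eps Hep). intros h Hh.
      destruct (Hall _ (Heps h Hh)) as [_ [HGi' _]]. apply HGi'; auto. apply pd_const. }
  assert (LE : forall c a b, (c < d)%nat -> (a < d)%nat -> (b < d)%nat -> Lg c a b = dGiE d ginv dg x c a b).
  { intros c a b Hc Ha Hb. rewrite (dGi_formula d g ginv dg x Lg c HP Hc) by (auto; intros; apply PR; auto). auto. }
  intros c a b Hc Ha Hb. apply (pd_unique (fun y => T0 d g ginv xi chi1 chi2 y a b) c x). apply HdT; auto.
  unfold T0. eapply pd_val. apply pd_plus. apply Pxx; auto. apply pd_mult. apply pd_mult. apply pd_const. apply P1; auto.
  apply PG; auto. rewrite LE by auto. unfold dTF. cbv beta. fold M A B C3. unfold m. ring. Qed.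

Theorem mainTheorem5 (d : nat) (c0 : R) (chi1 chi2 : R -> R) (U : pt -> Prop)
    (g ginv : pt -> nat -> nat -> R) (dg : pt -> nat -> nat -> nat -> R)
    (xi : pt -> nat -> R) (dxi : pt -> nat -> nat -> R) :
  (3 <= d)%nat ->
  c0 <> 0 ->
  (forall m, m < 0 -> derivable_pt_lim (chi0 d c0) m (chi1 m)) ->
  (forall m, m < 0 -> derivable_pt_lim chi1 m (chi2 m)) ->
  spacetime d U g ginv dg ->
  vector_field d U xi dxi ->
  (* xi timelike *)
  (forall x, U x -> mu d g xi x < 0) ->
  (* nabla_a T_0^{ab} = 0 *)
  (forall x, U x -> exists dT : nat -> nat -> nat -> R,
      (forall a b c, (a < d)%nat -> (b < d)%nat -> (c < d)%nat ->
         has_pd (fun y => T0 d g ginv xi chi1 chi2 y a b) c x (dT c a b)) /\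
      (forall b, (b < d)%nat -> div2 d ginv dg (T0 d g ginv xi chi1 chi2) dT x b = 0)) ->
  (* (i) *)
  (forall x, U x -> exists dmu : nat -> R,
      (forall c, (c < d)%nat -> has_pd (mu d g xi) c x (dmu c)) /\
      (let mudot := sumd d (fun a => xi x a * dmu a) in
       mudot / mu d g xi x = 2 * Dv d ginv dg xi dxi x / INR d /\
       forall b, (b < d)%nat ->
         xidot d ginv dg xi dxi x b =
         (mudot / mu d g xi x) * xi x b - / 2 * sumd d (fun c => ginv x b c * dmu c))) /\
  (* (ii) *)
  (forall x, U x ->
      (forall a, (a < d)%nat ->
         S0 d g ginv xi chi1 chi2 x a = - 4 * mu d g xi x * chi2 (mu d g xi x) * xi x a) /\
      exists dS : nat -> nat -> R,
        (forall a c, (a < d)%nat -> (c < d)%nat ->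
           has_pd (fun y => S0 d g ginv xi chi1 chi2 y a) c x (dS c a)) /\
        div1 d ginv dg (S0 d g ginv xi chi1 chi2) dS x = 0) /\
  (* (iii) *)
  (forall t s : pt -> R,
      (forall x, U x -> forall a b, (a < d)%nat -> (b < d)%nat ->
         / 2 * (cov_xi_low d g ginv dg xi dxi x a b + cov_xi_low d g ginv dg xi dxi x b a)
         = t x * g x a b + s x * xi_low d g xi x a * xi_low d g xi x b) ->
      forall x, U x ->
        s x = 0 /\ t x = Dv d ginv dg xi dxi x / INR d /\
        (forall a b, (a < d)%nat -> (b < d)%nat ->
           / 2 * (cov_xi_low d g ginv dg xi dxi x a b + cov_xi_low d g ginv dg xi dxi x b a)
           = Dv d ginv dg xi dxi x / INR d * g x a b)).
Proof.
  intros Hd Hc0 H1 H2 Hs Hvf Htl Hdiv.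
  pose proof Hs as [HU Hall].
  assert (KEY : forall x, U x -> forall b, (b < d)%nat ->
    div2 d ginv dg (T0 d g ginv xi chi1 chi2) (dTF d g ginv dg xi dxi chi1 chi2 (C3f d c0 (mu d g xi x)) (dmuF d g dg xi dxi x) x) x b = 0).
  { intros x Hx b Hb. destruct (Hdiv x Hx) as [dT [HdT Hz]].
    rewrite <- (div2_ext d ginv dg _ dT) by (auto; intros; eapply L_div; eauto). apply Hz; auto. }
  assert (C3E : forall x, U x -> C3f d c0 (mu d g xi x) = chi2 (mu d g xi x) * (pp d - 2) / mu d g xi x).
  { intros x Hx. pose proof (Htl x Hx) as HM. destruct (chi_facts d c0 chi1 chi2 H1 H2 _ HM) as [_ [E2 _]].
    unfold C3f. rewrite chi3_rel by auto. rewrite E2. auto. }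
  assert (PI : forall x, U x ->
    let mudot := sumd d (fun a => xi x a * dmuF d g dg xi dxi x a) in
    mudot / mu d g xi x = 2 * Dv d ginv dg xi dxi x / INR d /\
    forall b, (b < d)%nat -> xidot d ginv dg xi dxi x b =
     (mudot / mu d g xi x) * xi x b - / 2 * sumd d (fun c => ginv x b c * dmuF d g dg xi dxi x c)).
  { intros x Hx. pose proof (Htl x Hx) as HM. pose proof (L_Hpt d U g ginv dg x Hs Hx) as HP.
    apply (part_i_alg d g ginv dg xi dxi x (chi2 (mu d g xi x))); auto.
    apply (chi1_nz d c0 chi1 chi2); auto.
    intros b Hb. rewrite <- (KEY x Hx b Hb). rewrite (divT d g ginv dg xi dxi chi1 chi2 _ _ x HP b Hb).
    rewrite C3E by auto. auto. }
  split; [|split].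
  - intros x Hx. exists (dmuF d g dg xi dxi x). split.
    intros c Hc. eapply L_pdmu; eauto. apply PI; auto.
  - intros x Hx. destruct (Hall x Hx) as [HGs [HGi _]].
    pose proof (Htl x Hx) as HM. pose proof (L_Hpt d U g ginv dg x Hs Hx) as HP.
    split. intros a Ha. apply S0_eq; auto.
    exists (dSF d g xi dxi chi2 (C3f d c0 (mu d g xi x)) (dmuF d g dg xi dxi x) x). split.
    + intros a c Ha Hc. destruct (open_upd d U x c HU Hx) as [eps [He Heps]].
      apply (pd_local _ (fun y => -4 * mu d g xi y * chi2 (mu d g xi y) * xi y a) c x _ eps He).
      { intros h Hh. pose proof (Heps h Hh) as Hu. destruct (Hall _ Hu) as [HGs' [HGi' _]]. apply S0_eq; auto. }
      destruct (chi_facts d c0 chi1 chi2 H1 H2 _ HM) as [_ [_ D2]].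
      eapply pd_val. apply pd_mult. apply pd_mult. apply pd_mult. apply pd_const.
      eapply L_pdmu; eauto.
      apply (pd_comp chi2 (mu d g xi) c x (dmuF d g dg xi dxi x c) (C3f d c0 (mu d g xi x))). eapply L_pdmu; eauto. exact D2.
      apply Hvf; auto. unfold dSF. cbv beta. ring.
    + rewrite (divS d g ginv dg xi dxi chi1 chi2 _ _ x HP).
      destruct (PI x Hx) as [R1 _]. rewrite C3E by auto.
      set (M := mu d g xi x) in *. set (mudot := sumd d (fun a => xi x a * dmuF d g dg xi dxi x a)) in *.
      assert (Hdn : 3 <= INR d) by (apply le_INR in Hd; simpl in Hd; lra).
      assert (Em : mudot = 2 * Dv d ginv dg xi dxi x / INR d * M) by (rewrite <- R1; field; lra).
      rewrite Em. unfold pp. field. lra.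
  - intros t s HK x Hx. pose proof (Htl x Hx) as HM. pose proof (L_Hpt d U g ginv dg x Hs Hx) as HP.
    destruct (PI x Hx) as [R1 R2].
    assert (Hst : s x = 0 /\ t x = Dv d ginv dg xi dxi x / INR d).
    { apply (part_iii_alg d g ginv dg xi dxi x (t x) (s x) HP Hd HM); auto.
      intros b Hb. rewrite R2 by auto. rewrite R1. auto. }
    destruct Hst as [Hs0 Ht]. split; auto. split; auto.
    intros a b Ha Hb. rewrite HK by auto. rewrite Hs0, Ht. ring.
Qed.
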